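(* Every effective Bonnet Myers sharp graph is reflective. That is: if $G=(V,E)$ is a finite, simple, connected graph with $K:=\min_{x\sim y}\kappa(x,y)>0$ and $\operatorname{diam}_{\operatorname{eff}}(G)=\frac{\max_v\operatorname{Deg}(v)}{K}$, then $G$ is reflective.
   Context: $d$ is the combinatorial distance, $\operatorname{Deg}$ the degree, $\operatorname{diam}_{\operatorname{eff}}(G)=\frac{1}{|V|^2}\sum_{x,y}d(x,y)$. Laplacian $\Delta f(x)=\sum_{y\sim x}(f(y)-f(x))$. Ollivier curvature: $\kappa(x,y)=\inf\{\Delta f(x)-\Delta f(y): f(y)-f(x)=1,\ \max_{u\sim v}|f(u)-f(v)|=1\}$. For adjacent $x\sim y$ let $V_x^y=\{v: d(v,x)<d(v,y)\}$, $V^{xy}=\{v:d(v,x)=d(v,y)\}$. A reflection from $x$ to $y$ is a graph automorphism $\phi$ with $\phi\circ\phi=\mathrm{id}$, $\phi(x)=y$, such that the edges between $V_x^y$ and $V_y^x$ are exactly $\{\{x',\phi(x')\}:x'\in V_x^y\}$ and $\phi$ fixes $V^{xy}$ pointwise. $G$ is reflective if every edge admits a reflection. *)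

(* Defs.v *)
From HB Require Import structures.
From mathcomp Require Import all_boot all_order all_algebra.
From mathcomp Require Import classical_sets reals.
Set Implicit Arguments. Unset Strict Implicit. Unset Printing Implicit Defensive.
Import Order.TTheory GRing.Theory Num.Theory.
Local Open Scope ring_scope.

Section Graph.
Variable T : finType.
Variable e : rel T.

Definition simple_graph := symmetric e /\ irreflexive e.
Definition connected_graph := forall x y : T, connect e x y.

Fixpoint walk_of_len (n : nat) (x y : T) : bool :=
  if n is n'.+1 then [exists z, e x z && walk_of_len n' z y] else x == y.

(* combinatorial distance: least n with a walk of length n (shortest walks
   have length < #|T| in a connected graph; value #|T| if unreachable) *)
Definition dist (x y : T) : nat := find (fun n => walk_of_len n x y) (iota 0 #|T|).

Definition Deg (x : T) : nat := #|[set y | e x y]|.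
Definition maxDeg : nat := \max_(v : T) Deg v.

Variable R : realType.

Definition diam_eff : R :=
  (\sum_(x : T) \sum_(y : T) (dist x y)%:R) / (#|T|%:R ^+ 2).

Definition lap (f : T -> R) (x : T) : R := \sum_(y : T | e x y) (f y - f x).

Definition ollivier (x y : T) : R :=
  inf [set lap f x - lap f y | f in
        [set f : T -> R | (f y - f x = 1) /\
           (forall u v, e u v -> `|f u - f v| <= 1) /\
           (exists u v, e u v /\ `|f u - f v| = 1)]].

Definition minCurv : R := inf [set ollivier xy.1 xy.2 | xy in [set xy : T * T | e xy.1 xy.2]].

Definition Vside (x y : T) : {set T} := [set v | dist v x < dist v y]%N.
Definition Vmid (x y : T) : {set T} := [set v | dist v x == dist v y].

Definition is_reflection (x y : T) (phi : T -> T) : Prop :=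
  (forall u v, e (phi u) (phi v) = e u v) /\
  (forall u, phi (phi u) = u) /\
  phi x = y /\
  (forall u v, u \in Vside x y -> v \in Vside y x -> e u v -> v = phi u) /\
  (forall u, u \in Vside x y -> (phi u \in Vside y x) && e u (phi u)) /\
  (forall v, v \in Vmid x y -> phi v = v).

Definition reflective : Prop :=
  forall x y, e x y -> exists phi : T -> T, is_reflection x y phi.

End Graph.

(* Main.v *)
Require Import Defs.
From HB Require Import structures.
From mathcomp Require Import all_boot all_order all_algebra.
From mathcomp Require Import classical_sets reals.
From mathcomp Require Import ring lra zify.
Import Order.TTheory GRing.Theory Num.Theory.
Set Implicit Arguments. Unset Strict Implicit. Unset Printing Implicit Defensive.

Section Dist.
Variables (T : finType) (e : rel T).
Hypothesis esym : symmetric e.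
Hypothesis eirr : irreflexive e.
Hypothesis conn : connected_graph e.

Lemma walk_rcons n a b c : walk_of_len e n a b -> e b c -> walk_of_len e n.+1 a c.
Proof.
elim: n a => [|n IH] a /=.
  by move/eqP=> -> H; apply/existsP; exists c; rewrite H eqxx.
move=> /existsP[z /andP[eaz wz]] ebc; apply/existsP; exists z.
by rewrite eaz; apply: IH.
Qed.

Lemma walk_path p a : path e a p -> walk_of_len e (size p) a (last a p).
Proof.
elim: p a => [|z p IH] a /=; first by [].
by move/andP=> [eaz pz]; apply/existsP; exists z; rewrite eaz IH.
Qed.

Lemma walk_exists a b : exists2 n, (n < #|T|)%N & walk_of_len e n a b.
Proof.
have /connectP[p pp ->] := conn a b.
case: (shortenP pp) => p' pp' up' _.
exists (size p'); last exact: walk_path.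
have := max_card (mem (a :: p')).
by rewrite (card_uniqP up') /=.
Qed.

Lemma dist_walk a b : walk_of_len e (dist e a b) a b.
Proof.
have [n nT w] := walk_exists a b.
have hs : has (fun n => walk_of_len e n a b) (iota 0 #|T|).
  by apply/hasP; exists n => //; rewrite mem_iota.
have := nth_find 0 hs.
rewrite nth_iota //.
by have := hs; rewrite has_find size_iota.
Qed.

Lemma dist_le a b n : walk_of_len e n a b -> (dist e a b <= n)%N.
Proof.
move=> w; case: (ltnP n #|T|) => hn.
  rewrite leqNgt; apply/negP => lt.
  have := before_find 0 lt; rewrite nth_iota // add0n w //.
have := find_size (fun n => walk_of_len e n a b) (iota 0 #|T|).
rewrite size_iota => h; exact: leq_trans h hn.
Qed.

Lemma dist_refl a : dist e a a = 0%N.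
Proof. by apply/eqP; rewrite -leqn0; apply: dist_le => /=. Qed.

Lemma dist0 a b : dist e a b = 0%N -> a = b.
Proof. by move=> h; have := dist_walk a b; rewrite h /= => /eqP. Qed.

Lemma dist_lip a b w : e a b -> (dist e a w <= (dist e b w).+1)%N.
Proof.
move=> eab; apply: dist_le => /=; apply/existsP; exists b.
by rewrite eab dist_walk.
Qed.

Lemma dist_lip2 a x y : e x y -> (dist e a y <= (dist e a x).+1)%N.
Proof. by move=> exy; apply: dist_le; apply: walk_rcons (dist_walk a x) exy. Qed.

Lemma dist_adj a b : e a b -> dist e a b = 1%N.
Proof.
move=> eab; apply/eqP; rewrite eqn_leq; apply/andP; split.
  by apply: dist_le => /=; apply/existsP; exists b; rewrite eab eqxx.
rewrite lt0n; apply/eqP => h; have := dist0 h => ab.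
by move: eab; rewrite ab eirr.
Qed.

Lemma dist_desc a w n : dist e a w = n.+1 ->
  exists2 b, e a b & dist e b w = n.
Proof.
move=> h; have := dist_walk a w; rewrite h /= => /existsP[b /andP[eab wb]].
exists b => //; apply/eqP; rewrite eqn_leq (dist_le wb) /=.
by have := dist_lip w eab; rewrite h.
Qed.

End Dist.

Section Lap.
Variables (R : realType) (T : finType) (e : rel T).
Hypothesis esym : symmetric e.
Hypothesis eirr : irreflexive e.
Hypothesis conn : connected_graph e.
Local Open Scope ring_scope.

Lemma lap_ext (f g : T -> R) x : (forall z, f z = g z) -> lap e f x = lap e g x.
Proof. by move=> h; rewrite /lap; apply: eq_bigr => z _; rewrite !h. Qed.

Lemma lapD (f g : T -> R) x : lap e (fun z => f z + g z) x = lap e f x + lap e g x.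
Proof. rewrite /lap -big_split /=; apply: eq_bigr => z _; ring. Qed.

Lemma lapN (f : T -> R) x : lap e (fun z => - f z) x = - lap e f x.
Proof. rewrite /lap -sumrN; apply: eq_bigr => z _; ring. Qed.

Lemma lapB (f g : T -> R) x : lap e (fun z => f z - g z) x = lap e f x - lap e g x.
Proof. by rewrite lapD lapN. Qed.

Lemma sum_lap (f : T -> R) : \sum_x lap e f x = 0.
Proof.
rewrite /lap.
under eq_bigr do rewrite sumrB.
rewrite sumrB (exchange_big_dep xpredT) //=.
apply/eqP; rewrite subr_eq0; apply/eqP; apply: eq_bigr => z _; apply: eq_bigl => a.
by rewrite esym.
Qed.

Lemma lip01 (f : T -> R) : (forall z, 0 <= f z <= 1) ->
  forall u v, e u v -> `|f u - f v| <= 1.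
Proof.
move=> h u v _; have /andP[? ?] := h u; have /andP[? ?] := h v.
rewrite ler_norml; apply/andP; split; lra.
Qed.

Lemma lip_natF (F : T -> nat) : (forall u v, e u v -> (F u <= (F v).+1)%N) ->
  forall u v, e u v -> `|(F u)%:R - (F v)%:R| <= 1 :> R.
Proof.
move=> h u v euv; have h1 := h u v euv; have h2 := h v u ltac:(by rewrite esym).
have : (F u)%:R <= (F v)%:R + 1 :> R by rewrite natr1 ler_nat.
have : (F v)%:R <= (F u)%:R + 1 :> R by rewrite natr1 ler_nat.
move=> ? ?; rewrite ler_norml; apply/andP; split; lra.
Qed.

Lemma lip_natFN (F : T -> nat) : (forall u v, e u v -> (F u <= (F v).+1)%N) ->
  forall u v, e u v -> `|(- (F u)%:R) - (- (F v)%:R)| <= 1 :> R.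
Proof.
move=> h u v euv; have := lip_natF h euv.
by rewrite -opprD normrN.
Qed.

Lemma curv a b (f : T -> R) : e a b -> f b - f a = 1 ->
  (forall u v, e u v -> `|f u - f v| <= 1) ->
  minCurv e R <= lap e f a - lap e f b.
Proof.
move=> eab fab lip.
apply: (le_trans (y := ollivier e R a b)).
- rewrite /minCurv; apply: ge_inf; last by exists (a, b).
  exists (- \sum_(p : T * T) `|ollivier e R p.1 p.2|) => r [p _ <-].
  rewrite (bigD1 p) //=.
  have : 0 <= \sum_(q | q != p) `|ollivier e R q.1 q.2|.
    by apply: sumr_ge0 => q _; exact: normr_ge0.
  have := ler_norm (- ollivier e R p.1 p.2); rewrite normrN.
  move=> ? ?; lra.
- rewrite /ollivier; apply: ge_inf; last first.
    exists f => //; split => //; split => //; exists a, b; split => //.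
    by rewrite distrC fab normr1.
  exists (-(\sum_(z | e a z) (1:R) + \sum_(z | e b z) (1:R))).
  move=> r [g [gab [glip _]] <-].
  have h1 : - \sum_(z | e a z) (1:R) <= lap e g a.
    rewrite -sumrN; apply: ler_sum => z ez.
    have := glip a z ez; rewrite ler_norml => /andP[? ?]; lra.
  have h2 : lap e g b <= \sum_(z | e b z) (1:R).
    apply: ler_sum => z ez.
    have := glip z b ltac:(by rewrite esym); rewrite ler_norml => /andP[? ?]; lra.
  lra.
Qed.

Lemma lap_dist_self w :
  lap e (fun z => ((dist e z w)%:R : R)) w = (Deg e w)%:R.
Proof.
rewrite /lap dist_refl mulr0n.
transitivity (\sum_(z | e w z) (1:R)).
  by apply: eq_bigr => z ewz; rewrite (dist_adj eirr) ?subr0 // esym.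
rewrite /Deg cardsE -sum1_card natr_sum.
by apply: eq_bigl.
Qed.

End Lap.

Section Sharp.
Variables (R : realType) (T : finType) (e : rel T).
Hypothesis esym : symmetric e.
Hypothesis eirr : irreflexive e.
Hypothesis conn : connected_graph e.
Local Open Scope ring_scope.
Variable K : R.
Hypothesis Cv : forall a b (f : T -> R), e a b -> f b - f a = 1 ->
  (forall u v, e u v -> `|f u - f v| <= 1) -> K <= lap e f a - lap e f b.

Definition dR w := fun z => ((dist e z w)%:R : R).

Lemma dist_lipF w : forall u v, e u v -> (dist e u w <= (dist e v w).+1)%N.
Proof. by move=> u v; apply: dist_lip. Qed.

Lemma E1 a w : K * (dist e a w)%:R <= (Deg e w)%:R - lap e (dR w) a.
Proof.
move: {2}(dist e a w) (erefl (dist e a w)) => n; elim: n a => [|n IH] a h.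
  rewrite h mulr0 (dist0 conn h) /dR lap_dist_self // subrr //.
have [b eab hb] := dist_desc conn h.
have H1 : K <= lap e (fun z => - dR w z) a - lap e (fun z => - dR w z) b.
  apply: Cv => //.
    by rewrite /dR h hb -natr1; ring.
  exact: lip_natFN (dist_lipF w).
rewrite !lapN in H1; have H2 := IH b hb.
rewrite h -natr1 mulrDr mulr1.
move: H1 H2; set p := lap _ _ a; set q := lap _ _ b; move=> H1 H2.
rewrite hb in H2; lra.
Qed.



Lemma sharp_all (D : R) (w0 : T) : (forall w, (Deg e w)%:R <= D) ->
  K * (\sum_x \sum_y ((dist e x y)%:R : R)) = (#|T|%:R)^+2 * D ->
  (forall w, (Deg e w)%:R = D) /\
  (forall a w, lap e (dR w) a = D - K * (dist e a w)%:R).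
Proof.
move=> hD hS.
set N : R := #|T|%:R.
have Npos : 0 < N by rewrite /N ltr0n; apply/card_gt0P; exists w0.
set g := fun a w => (Deg e w)%:R - lap e (dR w) a - K * (dist e a w)%:R.
have g0 : forall a w, 0 <= g a w by move=> a w; have := E1 a w; rewrite /g; lra.
have inner : forall w, \sum_a g a w =
    (Deg e w)%:R * N - \sum_a lap e (dR w) a - K * \sum_a (dist e a w)%:R.
  by move=> w; rewrite /g !sumrB sumr_const -mulr_sumr mulr_natr.
have p1 : \sum_w N * (D - (Deg e w)%:R) = N * (D * N) - N * \sum_w (Deg e w)%:R.
  by rewrite -mulr_sumr sumrB sumr_const mulr_natr mulrBr.
have p2 : \sum_w \sum_a g a w = N * \sum_w (Deg e w)%:R - K * \sum_x \sum_y ((dist e x y)%:R : R).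
  under eq_bigr do rewrite inner sum_lap // subr0.
  have ex : \sum_w \sum_a ((dist e a w)%:R : R) = \sum_x \sum_y ((dist e x y)%:R : R).
    by rewrite exchange_big.
  rewrite sumrB -ex -mulr_sumr -mulr_suml; ring.
have key : \sum_w (N * (D - (Deg e w)%:R) + \sum_a g a w) = 0.
  rewrite big_split /= p1 p2 hS; rewrite expr2; ring.
have each := psumr_eq0P _ key.
have H : forall w, N * (D - (Deg e w)%:R) + \sum_a g a w = 0.
  move=> w; apply: each => // w' _; apply: addr_ge0.
    by apply: mulr_ge0; [lra | have := hD w'; lra].
  by apply: sumr_ge0 => a _; exact: g0.
have H1 : forall w, (Deg e w)%:R = D.
  move=> w; have := H w.
  have : 0 <= \sum_a g a w by apply: sumr_ge0 => a _; exact: g0.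
  have := hD w; move=> h1 h2 h3.
  have : N * (D - (Deg e w)%:R) = 0.
    apply/eqP; rewrite eq_le; apply/andP; split; first lra.
    by apply: mulr_ge0; lra.
  move/eqP; rewrite mulf_eq0 => /orP[/eqP|/eqP]; lra.
split => // a w.
have := H w; rewrite H1 subrr mulr0 add0r => hs.
have := psumr_eq0P (fun a _ => g0 a w) hs (i := a) isT.
by rewrite /g H1 => h; lra.
Qed.

End Sharp.

Unset Implicit Arguments.
Set Implicit Arguments.
Section Edge.
Variables (R : realType) (T : finType) (e : rel T).
Hypothesis esym : symmetric e.
Hypothesis eirr : irreflexive e.
Hypothesis conn : connected_graph e.
Local Open Scope ring_scope.
Variables (K D : R).
Hypothesis Cv : forall a b (f : T -> R), e a b -> f b - f a = 1 ->
  (forall u v, e u v -> `|f u - f v| <= 1) -> K <= lap e f a - lap e f b.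
Hypothesis E : forall a w, lap e (dR R e w) a = D - K * (dist e a w)%:R.

Definition iS (A : {set T}) : T -> R := fun z => (z \in A)%:R.

Lemma lap_ext_on (f g : T -> R) u :
  (forall t, e u t -> f t - f u = g t - g u) -> lap e f u = lap e g u.
Proof. by move=> h; apply: eq_bigr. Qed.

Lemma lap_ind_one (A : {set T}) u : u \notin A -> lap e (iS A) u = 1 ->
  (exists z, e u z && (z \in A)) /\
  (forall z1 z2, e u z1 -> z1 \in A -> e u z2 -> z2 \in A -> z1 = z2).
Proof.
move=> uA; have -> : lap e (iS A) u = \sum_(z | e u z) iS A z.
  by apply: eq_bigr => z _; rewrite {2}/iS (negbTE uA) subr0.
have h0 : forall z, e u z -> 0 <= iS A z by move=> z _; rewrite /iS ler0n.
move=> hs; split.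
  have hn : \sum_(z | e u z) iS A z <> 0 by rewrite hs; apply/eqP; exact: oner_neq0.
  have [z /andP[euz]] := psumr_neq0P h0 hn.
  by rewrite /iS ltr0n lt0b => zA; exists z; rewrite euz.
move=> z1 z2 e1 A1 e2 A2; case: (eqVneq z2 z1) => // ne.
move: hs; rewrite (bigD1 z1) //= {1}/iS A1 /= => hs.
have hr : \sum_(i | e u i && (i != z1)) iS A i = 0 by lra.
have h0' : forall z, e u z && (z != z1) -> 0 <= iS A z.
  by move=> z /andP[ez _]; exact: h0.
have := psumr_eq0P h0' hr (i := z2).
by rewrite e2 ne /= => /(_ isT); rewrite /iS A2 /= => /eqP; rewrite oner_eq0.
Qed.

Variables (x y : T).
Hypothesis exy : e x y.

Notation X := (Vside e x y).
Notation Y := (Vside e y x).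
Notation M := (Vmid e x y).
Notation dx := (dist e ^~ x).
Notation dy := (dist e ^~ y).

Lemma bnd1 z : (dy z <= (dx z).+1)%N.
Proof. have h := dist_lip2 conn z exy; exact h. Qed.
Lemma bnd2 z : (dx z <= (dy z).+1)%N.
Proof. have h := dist_lip2 conn z (x:=y) (y:=x); apply: h; by rewrite esym. Qed.

Lemma inX z : (z \in X) = (dx z < dy z)%N. Proof. by rewrite inE. Qed.
Lemma inY z : (z \in Y) = (dy z < dx z)%N. Proof. by rewrite inE. Qed.
Lemma inM z : (z \in M) = (dx z == dy z). Proof. by rewrite inE. Qed.

Lemma X_dist z : z \in X -> dy z = (dx z).+1.
Proof. by rewrite inX => h; have := bnd1 z; lia. Qed.
Lemma Y_dist z : z \in Y -> dx z = (dy z).+1.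
Proof. by rewrite inY => h; have := bnd2 z; lia. Qed.

Lemma hid z : dR R e x z - dR R e y z = iS Y z - iS X z.
Proof.
rewrite /dR /iS inX inY.
case: (ltngtP (dx z) (dy z)) => h /=.
- have -> : dy z = (dx z).+1 by have := bnd1 z; lia.
  by rewrite -natr1; ring.
- have -> : dx z = (dy z).+1 by have := bnd2 z; lia.
  by rewrite -natr1; ring.
- by rewrite h; ring.
Qed.

Lemma LhX u : u \in X -> lap e (iS Y) u - lap e (iS X) u = K.
Proof.
move=> uX; rewrite -lapB -(lap_ext e u (f := fun z => dR R e x z - dR R e y z) (g := fun z => iS Y z - iS X z) hid) lapB !E (X_dist uX) -natr1; ring.
Qed.

Lemma LhY u : u \in Y -> lap e (iS Y) u - lap e (iS X) u = - K.
Proof.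
move=> uY; rewrite -lapB -(lap_ext e u (f := fun z => dR R e x z - dR R e y z) (g := fun z => iS Y z - iS X z) hid) lapB !E (Y_dist uY) -natr1; ring.
Qed.


Lemma max_id z : ((maxn (dx z) (dy z))%:R : R) = dR R e y z + iS Y z.
Proof.
rewrite /dR /iS inY; case: (ltnP (dy z) (dx z)) => h.
  have -> : dx z = (dy z).+1 by have := bnd2 z; lia.
  by rewrite /= -natr1.
by rewrite /= addr0.
Qed.

Lemma min_id z : ((minn (dx z) (dy z))%:R : R) = dR R e y z - iS X z.
Proof.
rewrite /dR /iS inX; case: (ltnP (dx z) (dy z)) => h.
  have -> : dy z = (dx z).+1 by have := bnd1 z; lia.
  by rewrite /= -natr1 addrK.
by rewrite /= subr0.
Qed.

Lemma n1_X u : u \in X -> lap e (iS Y) u = 1.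
Proof.
move=> uX; move: {2}(dx u) (erefl (dx u)) => n; elim: n u uX => [|n IH] u uX hu.
  rewrite (dist0 conn hu) /lap {2}/iS.
  have -> : (x \in Y) = false.
    by rewrite inY dist_refl (dist_adj eirr conn exy).
  rewrite (bigD1 y) //= big1 => [|z /andP[exz zy]].
    have yY : y \in Y by rewrite inY dist_refl (dist_adj eirr conn (b := x)) // esym.
    by rewrite /iS yY subr0 addr0.
  have ezx : e z x by rewrite esym.
  have zY : (z \in Y) = false.
    rewrite inY (dist_adj eirr conn ezx) ltnS leqn0; apply/negP => /eqP /(dist0 conn) zy'.
    by rewrite zy' eqxx in zy.
  by rewrite /iS zY subr0.
have [b eub hb] := dist_desc conn hu.
have huy : dy u = n.+2 by rewrite (X_dist uX) hu.
have hby : dy b = n.+1.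
  have := dist_lip conn y eub; have := bnd1 b; rewrite hb huy; lia.
have bX : b \in X by rewrite inX hb hby.
have IHb := IH b bX hb.
have lipmax : forall a c, e a c -> (maxn (dx a) (dy a) <= (maxn (dx c) (dy c)).+1)%N.
  by move=> a c eac; have := dist_lip conn x eac; have := dist_lip conn y eac; lia.
have lipmin : forall a c, e a c -> (minn (dx a) (dy a) <= (minn (dx c) (dy c)).+1)%N.
  by move=> a c eac; have := dist_lip conn x eac; have := dist_lip conn y eac; lia.
have C1 := Cv (f := fun z => - ((maxn (dx z) (dy z))%:R : R)) eub _ (lip_natFN R esym lipmax).
have C2 := Cv (f := fun z => - ((minn (dx z) (dy z))%:R : R)) eub _ (lip_natFN R esym lipmin).
have m1 : maxn (dx b) (dy b) = n.+1 by rewrite hb hby; lia.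
have m2 : maxn (dx u) (dy u) = n.+2 by rewrite hu huy; lia.
have m3 : minn (dx b) (dy b) = n by rewrite hb hby; lia.
have m4 : minn (dx u) (dy u) = n.+1 by rewrite hu huy; lia.
move: C1 C2; rewrite m1 m2 m3 m4 -!natr1 => C1 C2.
have {C1}C1 := C1 ltac:(ring).
have {C2}C2 := C2 ltac:(ring).
rewrite !lapN in C1 C2.
rewrite !(lap_ext e _ max_id) !(lap_ext e _ min_id) ?lapD ?lapB ?lapN in C1 C2.
have H1 := LhX uX; have H2 := LhX bX.
move: C1 C2 H1 H2 IHb; rewrite !E huy hby -!natr1.
move=> *; lra.
Qed.

Lemma XnY z : z \in X -> z \notin Y.
Proof. by rewrite inX inY => h; rewrite -leqNgt ltnW. Qed.
Lemma XnM z : z \in X -> z \notin M.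
Proof. by rewrite inX inM => h; rewrite neq_ltn h. Qed.
Lemma YnX z : z \in Y -> z \notin X.
Proof. by rewrite inX inY => h; rewrite -leqNgt ltnW. Qed.
Lemma YnM z : z \in Y -> z \notin M.
Proof. by rewrite inY inM => h; rewrite neq_ltn h orbT. Qed.

Lemma lap_const (c : R) u : lap e (fun _ => c) u = 0.
Proof. by rewrite /lap big1 // => z _; rewrite subrr. Qed.

Lemma Qlem u v m : u \in X -> v \in Y -> e u v -> lap e (iS Y) u = 1 ->
  lap e (iS X) v = 1 -> m \in M -> e v m -> e u m.
Proof.
move=> uX vY euv hu1 hv1 mM evm.
pose g := fun z => (((z \in M) && ~~ e u z)%:R : R).
have g0 : forall z, 0 <= g z by move=> z; rewrite /g ler0n.
have f01 : forall z, 0 <= iS Y z + g z <= 1.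
  move=> z; rewrite /iS /g; case zY: (z \in Y).
    by rewrite (negbTE (YnM zY)) /= addr0 ler01 lexx.
  by rewrite /= add0r; case: ((z \in M) && ~~ e u z) => /=; rewrite ?lexx ?ler01.
have C := Cv (f := fun z => iS Y z + g z) euv _ (lip01 f01).
have {C}C : K <= lap e (fun z => iS Y z + g z) u - lap e (fun z => iS Y z + g z) v.
  apply: C; rewrite /g /iS vY (negbTE (YnM vY)) (negbTE (XnY uX)) (negbTE (XnM uX)) /=.
  by rewrite !addr0 subr0.
rewrite !lapD in C.
have gu : lap e g u = 0.
  rewrite /lap big1 // => z ez; rewrite /g ez andbF (negbTE (XnM uX)) /=.
  by rewrite subrr.
have gv : lap e g v = \sum_(z | e v z) g z.
  by apply: eq_bigr => z _; rewrite {2}/g (negbTE (YnM vY)) /= subr0.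
have H1 := LhX uX; have H2 := LhY vY.
have sg : 0 <= \sum_(z | e v z) g z by apply: sumr_ge0 => z _.
have s0 : \sum_(z | e v z) g z = 0 by lra.
have := psumr_eq0P (fun z _ => g0 z) s0 (i := m) evm.
by rewrite /g mM /=; case: (e u m) => //= /eqP; rewrite oner_eq0.
Qed.


Lemma Plem u v z s : u \in X -> v \in Y -> e u v -> lap e (iS Y) u = 1 ->
  lap e (iS X) v = 1 -> z \in Y -> e z v -> lap e (iS X) z = 1 ->
  s \in X -> e z s -> e s u.
Proof.
move=> uX vY euv hu1 hv1 zY ezv hz1 sX ezs.
pose S := [set t | (t \in X) && ((t == u) || e u t)].
pose NS := [set t | [exists s0, (s0 \in S) && ((t == s0) || e t s0)]].
have SNS t : t \in S -> t \in NS.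
  by move=> tS; rewrite inE; apply/existsP; exists t; rewrite tS eqxx.
have adjNS a c : e a c -> c \in S -> a \in NS.
  by move=> eac cS; rewrite inE; apply/existsP; exists c; rewrite cS eac orbT.
pose F := fun t => ((t \notin S) + (t \notin NS))%N.
have lipF : forall a c, e a c -> (F a <= (F c).+1)%N.
  move=> a c eac; rewrite /F.
  have h1 := adjNS a c eac; have h2 := adjNS c a ltac:(by rewrite esym).
  have h3 := SNS a; have h4 := SNS c.
  move: h1 h2 h3 h4; case: (a \in S); case: (c \in S); case: (a \in NS);
    case: (c \in NS) => //=.
  all: try by move=> /(_ isT).
  all: try by move=> _ /(_ isT).
  all: try by move=> _ _ /(_ isT).
  all: try by move=> _ _ _ /(_ isT).
pose f := fun t => ((F t)%:R : R).
have uS : u \in S by rewrite inE uX eqxx.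
have vnS : v \notin S by rewrite inE negb_and (YnX vY).
have vNS : v \in NS by apply: (adjNS v u) => //; rewrite esym.
have C := Cv (f := f) euv _ (lip_natF R esym lipF).
have {C}C : K <= lap e f u - lap e f v.
  by apply: C; rewrite /f /F uS (SNS u uS) vnS vNS /= subr0.
have lu : lap e f u = - lap e (iS X) u.
  rewrite -lapN (lap_ext_on (g := fun t => - iS X t)) // => t eut.
  have tNS : t \in NS by apply: (adjNS t u) => //; rewrite esym.
  rewrite /f /F uS (SNS u uS) tNS /iS uX inE eut orbT andbT.
  by case: (t \in X) => /=; ring.
have vu : e v u by rewrite esym.
have nbrv := proj2 (lap_ind_one (YnX vY) hv1).
have nbrz := proj2 (lap_ind_one (YnX zY) hz1).
have nbru := proj2 (lap_ind_one (XnY uX) hu1).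
have lv : lap e f v = -1 + \sum_(t | e v t && (t != u)) (f t - 1).
  rewrite /lap (bigD1 u) //= /f /F uS (SNS u uS) vnS vNS /=.
  by congr (_ + _); ring.
have t0 : forall t, e v t && (t != u) -> 0 <= f t - 1.
  move=> t /andP[evt tu].
  have tX : t \notin X.
    by apply/negP => tX; move: tu; rewrite (nbrv t u evt tX vu uX) eqxx.
  have tS : t \notin S by rewrite inE negb_and tX.
  by rewrite /f /F tS subr_ge0 ler1n.
have sp : 0 <= \sum_(t | e v t && (t != u)) (f t - 1) by apply: sumr_ge0.
have H1 := LhX uX.
have sm0 : \sum_(t | e v t && (t != u)) (f t - 1) = 0 by lra.
have zu : z != u.
  by apply/negP => /eqP zu; move: zY; rewrite zu (negbTE (XnY uX)).
have := psumr_eq0P t0 sm0 (i := z).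
have evz : e v z by rewrite esym.
rewrite evz zu => /(_ isT) /eqP; rewrite subr_eq0 /f (_ : (1:R) = 1%:R) // eqr_nat.
have znS : z \notin S by rewrite inE negb_and (YnX zY).
rewrite /F znS /=; case zNS: (z \in NS) => //= _.
move: zNS; rewrite inE => /existsP[s0 /andP[s0S /orP[/eqP zs0|ezs0]]].
  by move: s0S; rewrite inE -zs0 (negbTE (YnX zY)).
move: s0S; rewrite inE => /andP[s0X /orP[/eqP s0u|eus0]].
  have euz : e u z by rewrite esym -s0u.
  have zv := nbru z v euz zY euv vY.
  by move: ezv; rewrite zv eirr.
have -> : s = s0 by apply: (nbrz s s0 ezs sX ezs0 s0X).
by rewrite esym.
Qed.

End Edge.

Unset Implicit Arguments.
Local Open Scope ring_scope.
Theorem theorem3p5 (R : realType) (T : finType) (e : rel T) :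
  simple_graph e -> connected_graph e ->
  0 < minCurv e R ->
  diam_eff e R = (maxDeg e)%:R / minCurv e R ->
  reflective e.
Proof.
move=> [esym eirr] conn Kpos hdiam x y exy.
set K := minCurv e R in Kpos hdiam.
set D : R := (maxDeg e)%:R.
have Cv : forall a b (f : T -> R), e a b -> f b - f a = 1 ->
    (forall u v, e u v -> `|f u - f v| <= 1) -> K <= lap e f a - lap e f b.
  by move=> a b f eab h l; have := curv esym eab h l; rewrite -/K.
have hD : forall w, (Deg e w)%:R <= D.
  by move=> w; rewrite /D ler_nat /maxDeg; exact: (leq_bigmax (F := Deg e) w).
have N0 : (#|T|%:R : R) ^+ 2 != 0.
  by rewrite expf_neq0 // pnatr_eq0 -lt0n; apply/card_gt0P; exists x.
have hS : K * (\sum_x \sum_y ((dist e x y)%:R : R)) = (#|T|%:R)^+2 * D.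
  move: hdiam; rewrite /diam_eff => /(congr1 (fun t => t * (#|T|%:R ^+ 2) * K)).
  rewrite divfK // [_ / K * _ * _]mulrAC divfK ?gt_eqF //.
  by rewrite mulrC /D => ->; rewrite mulrC.
have [_ E] := sharp_all esym eirr conn Cv x hD hS.
have eyx : e y x by rewrite esym.
pose X := Vside e x y. pose Y := Vside e y x. pose M := Vmid e x y.
have n1X : forall u, u \in X -> lap e (iS R Y) u = 1 := n1_X esym eirr conn Cv E exy.
have n1Y : forall u, u \in Y -> lap e (iS R X) u = 1 := n1_X esym eirr conn Cv E eyx.
have MM : forall z, (z \in Vmid e y x) = (z \in M) by move=> z; rewrite !inE eq_sym.
have tri : forall z, [\/ z \in X, z \in Y | z \in M].
  move=> z; rewrite !inE; case: (ltngtP (dist e z x) (dist e z y)) => h.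
  - by apply: Or31.
  - by apply: Or32.
  - by apply: Or33.
have nbX : forall u, u \in X -> (exists z, e u z && (z \in Y)) /\
    (forall z1 z2, e u z1 -> z1 \in Y -> e u z2 -> z2 \in Y -> z1 = z2).
  by move=> u uX; apply: lap_ind_one (XnY uX) (n1X u uX).
have nbY : forall u, u \in Y -> (exists z, e u z && (z \in X)) /\
    (forall z1 z2, e u z1 -> z1 \in X -> e u z2 -> z2 \in X -> z1 = z2).
  by move=> u uY; apply: lap_ind_one (YnX uY) (n1Y u uY).
pose phi := fun u => if u \in X then odflt u [pick z | e u z && (z \in Y)]
  else if u \in Y then odflt u [pick z | e u z && (z \in X)] else u.
have phiX : forall u, u \in X -> e u (phi u) && (phi u \in Y).
  move=> u uX; rewrite /phi uX; case: pickP => [z hz //|none].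
  by have [[z hz] _] := nbX u uX; rewrite none in hz.
have phiY : forall u, u \in Y -> e u (phi u) && (phi u \in X).
  move=> u uY; rewrite /phi uY (negbTE (YnX uY)); case: pickP => [z hz //|none].
  by have [[z hz] _] := nbY u uY; rewrite none in hz.
have phiM : forall u, u \in M -> phi u = u.
  by move=> u uM; rewrite /phi !inE; move: uM; rewrite inE => /eqP ->; rewrite ltnn.
have uqX : forall u z, u \in X -> e u z -> z \in Y -> z = phi u.
  move=> u z uX euz zY; have /andP[h1 h2] := phiX u uX.
  exact: (proj2 (nbX u uX)) euz zY h1 h2.
have uqY : forall u z, u \in Y -> e u z -> z \in X -> z = phi u.
  move=> u z uY euz zX; have /andP[h1 h2] := phiY u uY.
  exact: (proj2 (nbY u uY)) euz zX h1 h2.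
have invol : forall u, phi (phi u) = u.
  move=> u; case: (tri u) => [uX|uY|uM].
  - have /andP[h1 h2] := phiX u uX; symmetry; apply: uqY => //; by rewrite esym.
  - have /andP[h1 h2] := phiY u uY; symmetry; apply: uqX => //; by rewrite esym.
  - by rewrite !phiM.
have hXM : forall u v, u \in X -> v \in M -> e u v -> e (phi u) v.
  move=> u v uX vM euv; have /andP[h1 h2] := phiX u uX.
  apply: (Qlem esym conn Cv E eyx (u := phi u) (v := u) (m := v)) => //.
  - by rewrite esym.
  - exact: n1Y.
  - exact: n1X.
  - by rewrite MM.
have hYM : forall u v, u \in Y -> v \in M -> e u v -> e (phi u) v.
  move=> u v uY vM euv; have /andP[h1 h2] := phiY u uY.
  apply: (Qlem esym conn Cv E exy (u := phi u) (v := u) (m := v)) => //.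
  - by rewrite esym.
  - exact: n1X.
  - exact: n1Y.
have hom : forall u v, e u v -> e (phi u) (phi v).
  move=> u v euv; have evu : e v u by rewrite esym.
  case: (tri u) => [uX|uY|uM]; case: (tri v) => [vX|vY|vM].
  - have /andP[h1 h2] := phiX u uX; have /andP[h3 h4] := phiX v vX.
    apply: (Plem esym eirr conn Cv E eyx (u := phi v) (v := v) (z := u) (s := phi u)) => //.
    + by rewrite esym.
    + exact: n1Y.
    + exact: n1X.
    + exact: n1X.
  - by rewrite (uqX u v) // invol esym; have /andP[] := phiX u uX.
  - by rewrite (phiM v vM); apply: hXM.
  - by rewrite (uqY u v) // invol esym; have /andP[] := phiY u uY.
  - have /andP[h1 h2] := phiY u uY; have /andP[h3 h4] := phiY v vY.
    apply: (Plem esym eirr conn Cv E exy (u := phi v) (v := v) (z := u) (s := phi u)) => //.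
    + by rewrite esym.
    + exact: n1X.
    + exact: n1Y.
    + exact: n1Y.
  - by rewrite (phiM v vM); apply: hYM.
  - by rewrite (phiM u uM) esym; apply: hXM.
  - by rewrite (phiM u uM) esym; apply: hYM.
  - by rewrite (phiM u uM) (phiM v vM).
exists phi; split.
  move=> u v; apply/idP/idP; last exact: hom.
  by move/hom; rewrite !invol.
split; first exact: invol.
have xX : x \in X by rewrite inE dist_refl (dist_adj eirr conn exy).
have yY : y \in Y by rewrite inE dist_refl (dist_adj eirr conn eyx).
split; first by symmetry; apply: uqX.
split; first by move=> u v uX vY euv; apply: uqX.
split; first by move=> u uX; have /andP[-> ->] := phiX u uX.
exact: phiM.
Qed.
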